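(* Let $a\in C^1(\mathbb{R})$ be real valued. For $C>0$ with $a(C^2)>0$ put $\omega=\omega(C)=a(C^2)^2/4$ and $\psi_\omega(x)=Ce^{-\sqrt\omega|x|}$, and write $a=a(C^2)$, $a'=a'(C^2)$. Consider $\int|\psi_\omega|^2dx$ as a function of $\omega$ along this family (locally, near a point with $a'\neq0$, where $C\mapsto\omega(C)$ is locally invertible). Then $$ \partial_\omega\int|\psi_\omega(x)|^2dx<0\quad\text{if } a'\in(-\infty,0)\cup(a/C^2,+\infty), $$ and $$ \partial_\omega\int|\psi_\omega(x)|^2dx>0\quad\text{if } 0<a'<a/C^2. $$ *)

(* Defs.v *)
From Stdlib Require Import Reals.
From Coquelicot Require Import Coquelicot.
Open Scope R_scope.

Definition omega_of (a : R -> R) (C : R) : R := (a (C ^ 2)) ^ 2 / 4.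

Definition psi (w C x : R) : R := C * exp (- sqrt w * Rabs x).

Definition mass (w C : R) : R :=
  RInt_gen (fun x => (Rabs (psi w C x)) ^ 2)
           (Rbar_locally m_infty) (Rbar_locally p_infty).

(* Main.v *)
Require Import Defs.
From Stdlib Require Import Reals Lra.
From Coquelicot Require Import Coquelicot.
Open Scope R_scope.

Lemma exp_sq (y : R) : exp y ^ 2 = exp (2 * y).
Proof. replace (2*y) with (y+y) by ring. rewrite exp_plus. ring. Qed.

Lemma lim_exp_left (K s : R) : 0 < s ->
  filterlim (fun x => K * exp (2 * s * x)) (Rbar_locally m_infty) (locally 0).
Proof.
  intros Hs. apply filterlim_locally. intros eps.
  assert (HK : 0 < Rabs K + 1) by (pose proof (Rabs_pos K); lra).
  exists (ln (eps / (Rabs K + 1)) / (2 * s)). intros x Hx.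
  unfold ball; simpl; unfold AbsRing_ball, abs, minus, plus, opp; simpl.
  rewrite Ropp_0, Rplus_0_r, Rabs_mult, (Rabs_right (exp _)) by (left; apply exp_pos).
  assert (H1 : exp (2 * s * x) < eps / (Rabs K + 1)).
  { rewrite <- (exp_ln (eps / (Rabs K + 1))).
    2: { apply Rdiv_lt_0_compat; [apply cond_pos|lra]. }
    apply exp_increasing.
    apply (Rmult_lt_compat_l (2*s)) in Hx; [|lra].
    replace (2 * s * (ln (eps / (Rabs K + 1)) / (2 * s))) with (ln (eps / (Rabs K + 1))) in Hx by (field; lra).
    lra. }
  assert (H2 : (Rabs K + 1) * exp (2 * s * x) < eps).
  { apply (Rmult_lt_compat_l (Rabs K + 1)) in H1; [|lra].
    replace ((Rabs K + 1) * (eps / (Rabs K + 1))) with (pos eps) in H1 by (field; lra). lra. }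
  pose proof (exp_pos (2*s*x)). nra.
Qed.

Lemma lim_exp_right (K s : R) : 0 < s ->
  filterlim (fun x => K * exp (- (2 * s * x))) (Rbar_locally p_infty) (locally 0).
Proof.
  intros Hs. apply filterlim_locally. intros eps.
  assert (HK : 0 < Rabs K + 1) by (pose proof (Rabs_pos K); lra).
  exists (- (ln (eps / (Rabs K + 1)) / (2 * s))). intros x Hx.
  unfold ball; simpl; unfold AbsRing_ball, abs, minus, plus, opp; simpl.
  rewrite Ropp_0, Rplus_0_r, Rabs_mult, (Rabs_right (exp _)) by (left; apply exp_pos).
  assert (H1 : exp (- (2 * s * x)) < eps / (Rabs K + 1)).
  { rewrite <- (exp_ln (eps / (Rabs K + 1))).
    2: { apply Rdiv_lt_0_compat; [apply cond_pos|lra]. }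
    apply exp_increasing.
    apply (Rmult_lt_compat_l (2*s)) in Hx; [|lra].
    replace (2 * s * - (ln (eps / (Rabs K + 1)) / (2 * s))) with (- ln (eps / (Rabs K + 1))) in Hx by (field; lra).
    lra. }
  assert (H2 : (Rabs K + 1) * exp (- (2 * s * x)) < eps).
  { apply (Rmult_lt_compat_l (Rabs K + 1)) in H1; [|lra].
    replace ((Rabs K + 1) * (eps / (Rabs K + 1))) with (pos eps) in H1 by (field; lra). lra. }
  pose proof (exp_pos (- (2*s*x))). nra.
Qed.

Lemma mass_eq (w C : R) : 0 < w -> mass w C = C ^ 2 / sqrt w.
Proof.
  intros Hw. pose proof (sqrt_lt_R0 w Hw) as Hs. set (s := sqrt w) in *.
  unfold mass.
  apply is_RInt_gen_unique.
  replace (C ^ 2 / s) with (plus (C^2/(2*s) - 0) (0 - - (C^2/(2*s))))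
    by (unfold plus; simpl; field; lra).
  refine (is_RInt_gen_Chasles _ 0 _ _ _ _).
  - refine (is_RInt_gen_ext (Derive (fun x => C^2/(2*s) * exp (2*s*x))) _ _ _ _).
    + exists (fun x => x < 0) (fun x => x = 0).
      * exists 0. auto.
      * reflexivity.
      * intros x y Hx Hy. cbn [fst snd]. subst y. intros t Ht.
        rewrite Rmin_left in Ht by lra. rewrite Rmax_right in Ht by lra.
        apply is_derive_unique. unfold psi. fold s. rewrite pow2_abs.
        rewrite Rabs_left by lra.
        replace ((C * exp (- s * - t)) ^ 2) with (C^2 * exp (- s * - t) ^2) by ring.
        rewrite exp_sq.
        auto_derive; auto. replace (2 * (- s * - t)) with (2 * s * t) by ring. field. lra.
    + refine (is_RInt_gen_Derive _ _ _ _ _ _ _).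
      * exists (fun _ => True) (fun x => True). exists 0; auto. constructor.
        intros; auto_derive; auto.
      * exists (fun _ => True) (fun x => True). exists 0; auto. constructor.
        intros x y _ _ t _.
        apply (continuous_ext (fun t => C^2 * exp (2*s*t))).
        { intros u. symmetry. apply is_derive_unique. auto_derive; auto. field; lra. }
        refine (ex_derive_continuous (K:=R_AbsRing) (V:=R_NormedModule) _ _ _). auto_derive; auto.
      * apply lim_exp_left; auto.
      * apply filterlim_locally. intros eps. unfold at_point.
        replace (2*s*0) with 0 by ring. rewrite exp_0, Rmult_1_r. apply ball_center.
  - refine (is_RInt_gen_ext (Derive (fun x => - (C^2/(2*s)) * exp (- (2*s*x)))) _ _ _ _).
    + exists (fun x => x = 0) (fun x => 0 < x).
      * reflexivity.
      * exists 0. auto.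
      * intros x y Hx Hy. cbn [fst snd]. subst x. intros t Ht.
        rewrite Rmin_left in Ht by lra. rewrite Rmax_right in Ht by lra.
        apply is_derive_unique. unfold psi. fold s. rewrite pow2_abs.
        rewrite Rabs_right by lra.
        replace ((C * exp (- s * t)) ^ 2) with (C^2 * exp (- s * t) ^2) by ring.
        rewrite exp_sq.
        auto_derive; auto. replace (2 * (- s * t)) with (- (2 * s * t)) by ring. field. lra.
    + refine (is_RInt_gen_Derive _ _ _ _ _ _ _).
      * exists (fun _ => True) (fun x => True). reflexivity. exists 0; auto.
        intros; auto_derive; auto.
      * exists (fun _ => True) (fun x => True). reflexivity. exists 0; auto.
        intros x y _ _ t _.
        apply (continuous_ext (fun t => C^2 * exp (- (2*s*t)))).
        { intros u. symmetry. apply is_derive_unique. auto_derive; auto. field; lra. }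
        refine (ex_derive_continuous (K:=R_AbsRing) (V:=R_NormedModule) _ _ _). auto_derive; auto.
      * apply filterlim_locally. intros eps. unfold at_point.
        replace (- (2*s*0)) with 0 by ring. rewrite exp_0, Rmult_1_r. apply ball_center.
      * apply lim_exp_right; auto.
Qed.

Lemma inv_deriv (g Ci : R -> R) (c0 w0 g' del : R) :
  is_derive g c0 g' -> g' <> 0 -> Ci w0 = c0 -> continuous Ci w0 -> 0 < del ->
  (forall w, Rabs (w - w0) < del -> g (Ci w) = w) -> is_derive Ci w0 (/ g').
Proof.
  intros Hg Hg' Hc0 Hc Hdel Hinv.
  apply is_derive_Reals in Hg. apply is_derive_Reals.
  apply continuity_pt_filterlim in Hc.
  intros eps Heps.
  assert (HG : 0 < Rabs g') by (apply Rabs_pos_lt; auto).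
  assert (Heta : 0 < Rmin (Rabs g' / 2) (eps * (Rabs g')^2 / 2)).
  { apply Rmin_pos. lra. apply Rmult_lt_0_compat; [|lra]. apply Rmult_lt_0_compat; nra. }
  destruct (Hg _ Heta) as [d1 Hd1].
  destruct (Hc d1 (cond_pos d1)) as [d2 [Hd2pos Hd2]].
  assert (Hd : 0 < Rmin d2 del) by (apply Rmin_pos; lra).
  exists (mkposreal _ Hd). intros h Hh0 Hh. simpl in Hh.
  assert (Hh2 : Rabs h < d2) by (eapply Rlt_le_trans; [exact Hh|apply Rmin_l]).
  assert (Hh3 : Rabs h < del) by (eapply Rlt_le_trans; [exact Hh|apply Rmin_r]).
  set (k := Ci (w0 + h) - c0).
  assert (Hg0 : g c0 = w0).
  { rewrite <- Hc0. apply Hinv. rewrite Rminus_diag, Rabs_R0. lra. }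
  assert (Hgk : g (c0 + k) = w0 + h).
  { unfold k. replace (c0 + (Ci (w0 + h) - c0)) with (Ci (w0 + h)) by ring.
    apply Hinv. replace (w0 + h - w0) with h by ring. auto. }
  assert (Hk0 : k <> 0).
  { intros E. rewrite E, Rplus_0_r, Hg0 in Hgk. lra. }
  assert (Hk1 : Rabs k < d1).
  { unfold k. rewrite <- Hc0. apply (Hd2 (w0 + h)). split.
    { split. exact I. intro E. apply Hh0. lra. }
    change (Rabs (w0 + h - w0) < d2). replace (w0 + h - w0) with h by ring. auto. }
  specialize (Hd1 k Hk0 Hk1). rewrite Hgk, Hg0 in Hd1.
  replace (w0 + h - w0) with h in Hd1 by ring.
  rewrite Hc0. fold k.
  set (p := h / k) in *.
  assert (Hp0 : p <> 0) by (unfold p, Rdiv; apply Rmult_integral_contrapositive_currified; [auto|apply Rinv_neq_0_compat; auto]).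
  replace (k / h - / g') with ((g' - p) / (p * g')) by (unfold p; field; auto).
  rewrite Rabs_div by (apply Rmult_integral_contrapositive; auto).
  rewrite Rabs_mult.
  assert (E1 : Rabs (p - g') < Rabs g' / 2) by (eapply Rlt_le_trans; [exact Hd1|apply Rmin_l]).
  assert (E2 : Rabs (p - g') < eps * (Rabs g')^2 / 2) by (eapply Rlt_le_trans; [exact Hd1|apply Rmin_r]).
  rewrite Rabs_minus_sym in E1, E2.
  assert (E3 : Rabs g' / 2 <= Rabs p).
  { pose proof (Rabs_triang_inv g' p). lra. }
  apply (Rmult_lt_reg_r (Rabs p * Rabs g')). nra.
  unfold Rdiv. rewrite Rmult_assoc, Rinv_l by nra. rewrite Rmult_1_r. assert (0 <= eps * (Rabs p - Rabs g' / 2) * Rabs g') by (apply Rmult_le_pos; [apply Rmult_le_pos|]; lra). nra.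
Qed.

Lemma omega_deriv (a a' : R -> R) (C0 : R) :
  (forall x, is_derive a x (a' x)) ->
  is_derive (omega_of a) C0 (a (C0 ^ 2) * a' (C0 ^ 2) * C0).
Proof.
  intros Ha. unfold omega_of.
  auto_derive.
  - exists (a' (C0 * (C0 * 1))). apply Ha.
  - rewrite (is_derive_unique (fun x => a x) _ _ (Ha _)). simpl. field.
Qed.

Theorem lemma3p3 :
  forall (a a' : R -> R) (C0 : R) (Cinv : R -> R),
    (forall x, is_derive a x (a' x)) ->
    (forall x, continuous a' x) ->
    0 < C0 -> 0 < a (C0 ^ 2) ->
    Cinv (omega_of a C0) = C0 ->
    continuous Cinv (omega_of a C0) ->
    (exists del : posreal, forall w,
        Rabs (w - omega_of a C0) < del -> omega_of a (Cinv w) = w) ->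
    ((a' (C0 ^ 2) < 0 \/ a (C0 ^ 2) / C0 ^ 2 < a' (C0 ^ 2)) ->
       exists d, is_derive (fun w => mass w (Cinv w)) (omega_of a C0) d /\ d < 0)
    /\
    (0 < a' (C0 ^ 2) < a (C0 ^ 2) / C0 ^ 2 ->
       exists d, is_derive (fun w => mass w (Cinv w)) (omega_of a C0) d /\ 0 < d).
Proof.
  intros a a' C0 Cinv Ha Ha'c HC0 HA Hci Hcc [del Hdel].
  set (A := a (C0 ^ 2)) in *. set (A' := a' (C0 ^ 2)) in *.
  set (w0 := omega_of a C0) in *.
  assert (Hw0 : w0 = A ^ 2 / 4) by reflexivity.
  assert (Hw0p : 0 < w0) by (rewrite Hw0; nra).
  assert (Hsq : sqrt w0 = A / 2).
  { rewrite Hw0. replace (A ^ 2 / 4) with ((A/2)^2) by field. apply sqrt_pow2. lra. }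
  assert (Hmain : A' <> 0 -> exists d, is_derive (fun w => mass w (Cinv w)) w0 d /\
            d = 4 * (A - A' * C0 ^ 2) / (A ^ 3 * A')).
  { intros HA'.
    assert (Hder : is_derive Cinv w0 (/ (A * A' * C0))).
    { apply (inv_deriv (omega_of a) Cinv C0 w0 (A * A' * C0) del).
      - apply omega_deriv; auto.
      - apply Rmult_integral_contrapositive_currified; [|lra].
        apply Rmult_integral_contrapositive_currified; lra.
      - auto.
      - auto.
      - apply cond_pos.
      - auto. }
    exists (4 * (A - A' * C0 ^ 2) / (A ^ 3 * A')). split; [|reflexivity].
    apply (is_derive_ext_loc (fun w => Cinv w ^ 2 / sqrt w)).
    { exists (mkposreal _ Hw0p). intros y Hy.
      unfold ball in Hy; simpl in Hy; unfold AbsRing_ball, abs, minus, plus, opp in Hy; simpl in Hy.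
      symmetry. apply mass_eq. apply Rabs_def2 in Hy. lra. }
    auto_derive.
    - repeat match goal with |- _ /\ _ => split end; try exact I; try exact Hw0p;
        try (exists (/ (A * A' * C0)); exact Hder); try (rewrite Hsq; lra).
    - replace (Derive (fun x : R => Cinv x) w0) with (/ (A*A'*C0)) by (symmetry; apply is_derive_unique; exact Hder). rewrite Hci, Hsq. field.
      repeat split; lra. }
  split.
  - intros Hcase.
    assert (HA' : A' <> 0).
    { destruct Hcase as [H|H]; [lra|]. assert (0 < A / C0 ^ 2) by (apply Rdiv_lt_0_compat; nra). lra. }
    destruct (Hmain HA') as [d [Hd Hdv]]. exists d. split; [exact Hd|]. rewrite Hdv.
    unfold Rdiv. assert (HA3 : 0 < A ^ 3) by (apply pow_lt; lra).
    destruct Hcase as [H|H].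
    + assert (Hq : / (A ^ 3 * A') < 0) by (apply Rinv_lt_0_compat; nra).
      assert (0 < A - A' * C0 ^ 2) by nra. nra.
    + assert (HAp : 0 < A / C0 ^ 2) by (apply Rdiv_lt_0_compat; nra).
      assert (H2 : A < A' * C0 ^ 2).
      { apply (Rmult_lt_compat_r (C0 ^ 2)) in H; [|nra].
        replace (A / C0 ^ 2 * C0 ^ 2) with A in H by (field; lra). lra. }
      assert (Hq : 0 < / (A ^ 3 * A')) by (apply Rinv_0_lt_compat; nra). nra.
  - intros [H1 H].
    destruct (Hmain ltac:(lra)) as [d [Hd Hdv]]. exists d. split; [exact Hd|]. rewrite Hdv.
    unfold Rdiv. assert (HA3 : 0 < A ^ 3) by (apply pow_lt; lra).
    assert (H2 : A' * C0 ^ 2 < A).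
    { apply (Rmult_lt_compat_r (C0 ^ 2)) in H; [|nra].
      replace (A / C0 ^ 2 * C0 ^ 2) with A in H by (field; lra). lra. }
    assert (Hq : 0 < / (A ^ 3 * A')) by (apply Rinv_0_lt_compat; nra). nra.
Qed.
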